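(* Let $m\ge2$, let $S\le H\le G$, and let $W$ be a cyclic $R_mH$-module which (with $S$ acting trivially) is a free $R_m(H/S)$-module. Then $W$ does not have property $\mathcal P(H)$.
   Context: $p$ is a prime, $G$ a cyclic group of order $p^n$, $R_m=\mathbb Z/p^m\mathbb Z$. Let $H\le G$ with generator $\tau$. For $m\ge2$, an $R_mH$-module $W$ has property $\mathcal P(H)$ if there exist an integer $s\ge0$ and elements $y,z\in W\setminus\big((\tau^{p^s}-1)W+pW\big)$ such that $(\tau^{p^s}-1)y=p^{m-1}z$. *)

(* Defs.v *)
From HB Require Import structures.
From mathcomp Require Import all_boot all_order all_algebra all_fingroup all_solvable.
Set Implicit Arguments. Unset Strict Implicit. Unset Printing Implicit Defensive.
Import GRing.Theory.
Local Open Scope ring_scope.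

(* R_m = Z/p^m Z is 'Z_(p^m).  An R_m H-module is an R_m-module W together with
   a linear action rho of the group H on W. *)
Definition is_RH_module (gT : finGroupType) (R : pzRingType) (W : lmodType R)
  (H : {group gT}) (rho : gT -> W -> W) : Prop :=
  [/\ (forall x, x \in H -> forall (a : R) (u v : W),
          rho x (a *: u + v) = a *: rho x u + rho x v),
      (forall u, rho 1%g u = u) &
      (forall x y, x \in H -> y \in H -> forall u, rho (x * y)%g u = rho x (rho y u))].

Definition cyclic_RH_module (gT : finGroupType) (R : pzRingType) (W : lmodType R)
  (H : {group gT}) (rho : gT -> W -> W) : Prop :=
  exists w0 : W, forall w : W, exists c : gT -> R,
    w = \sum_(h in H) c h *: rho h w0.

Definition acts_trivially (gT : finGroupType) (W : Type)
  (S : {group gT}) (rho : gT -> W -> W) : Prop :=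
  forall s, s \in S -> forall w, rho s w = w.

(* With S acting trivially, W is a free R(H/S)-module: there is a basis b such that
   every w is a unique R(H/S)-linear combination of b; an element of the group ring
   R(H/S) is a coefficient function on the cosets of S in H, the coset C acting
   through (any) representative repr C. *)
Definition free_RHS_module (gT : finGroupType) (R : pzRingType) (W : lmodType R)
  (H S : {group gT}) (rho : gT -> W -> W) : Prop :=
  exists b : seq W,
    (forall w : W, exists c : nat -> {set gT} -> R,
        w = \sum_(i < size b) \sum_(C in rcosets S H) c i C *: rho (repr C) b`_i) /\
    (forall c : nat -> {set gT} -> R,
        \sum_(i < size b) \sum_(C in rcosets S H) c i C *: rho (repr C) b`_i = 0 ->
        forall i, (i < size b)%N -> forall C, C \in rcosets S H -> c i C = 0).

(* Property P(H) for an R_m H-module W, H = <[tau]>: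
   there are s >= 0 and y, z not in (tau^(p^s) - 1) W + p W with
   (tau^(p^s) - 1) y = p^(m-1) z. *)
Definition in_tauW_pW (gT : finGroupType) (W : zmodType) (rho : gT -> W -> W)
  (t : gT) (p : nat) (y : W) : Prop :=
  exists a b : W, y = (rho t a - a) + b *+ p.

Definition property_P (gT : finGroupType) (R : pzRingType) (W : lmodType R)
  (rho : gT -> W -> W) (tau : gT) (p m : nat) : Prop :=
  exists (s : nat) (y z : W),
    ~ in_tauW_pW rho (tau ^+ (p ^ s))%g p y /\
    ~ in_tauW_pW rho (tau ^+ (p ^ s))%g p z /\
    rho (tau ^+ (p ^ s))%g y - y = z *+ (p ^ m.-1).

(* Main.v *)
Require Import Defs.
From HB Require Import structures.
From mathcomp Require Import all_boot all_order all_algebra all_fingroup all_solvable.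
Set Implicit Arguments. Unset Strict Implicit. Unset Printing Implicit Defensive.
Import GRing.Theory.
Local Open Scope ring_scope.

Section Lin.
Variables (R : pzRingType) (W : lmodType R) (G : W -> W).
Hypothesis hG : forall a u v, G (a *: u + v) = a *: G u + G v.
Lemma linG0 : G 0 = 0.
Proof. have := hG 1 0 0; rewrite scale1r addr0 scale1r => /eqP. by rewrite -subr_eq subrr eq_sym => /eqP. Qed.
Lemma linGD u v : G (u + v) = G u + G v.
Proof. by have := hG 1 u v; rewrite !scale1r. Qed.
Lemma linGZ a u : G (a *: u) = a *: G u.
Proof. by rewrite -[a *: u]addr0 hG linG0 addr0. Qed.
Lemma linGN u : G (- u) = - G u.
Proof. by rewrite -scaleN1r linGZ scaleN1r. Qed.
Lemma linGB u v : G (u - v) = G u - G v.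
Proof. by rewrite linGD linGN. Qed.
Lemma linGMn u k : G (u *+ k) = G u *+ k.
Proof. elim: k => [|k IH]; first by rewrite !mulr0n linG0. by rewrite !mulrS linGD IH. Qed.
Lemma linGsum (I : Type) (s : seq I) (P : pred I) (f : I -> W) :
  G (\sum_(i <- s | P i) f i) = \sum_(i <- s | P i) G (f i).
Proof. exact: (big_morph G linGD linG0). Qed.
End Lin.

Lemma lin_iter (R : pzRingType) (W : lmodType R) (G : W -> W) :
  (forall a u v, G (a *: u + v) = a *: G u + G v) ->
  forall l a u v, iter l G (a *: u + v) = a *: iter l G u + iter l G v.
Proof. move=> hG; elim=> [//|l IH] a u v /=. by rewrite IH hG. Qed.

Lemma lin_sub (R : pzRingType) (W : lmodType R) (G : W -> W) :
  (forall a u v, G (a *: u + v) = a *: G u + G v) ->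
  forall a u v, (G (a *: u + v) - (a *: u + v)) = a *: (G u - u) + (G v - v).
Proof. move=> hG a u v; by rewrite hG opprD addrACA scalerBr. Qed.

Lemma rot_sum (W : zmodType) (r : nat) (f : nat -> W) u :
  \sum_(0 <= l < r) f ((u + l) %% r)%N = \sum_(0 <= l < r) f l.
Proof.
elim: u => [|u IH].
  by apply: eq_big_nat => l /andP[_ hl]; rewrite add0n modn_small.
case: r IH => [|r] IH; first by rewrite !big_geq.
rewrite -IH.
set h := fun l => f ((u + l) %% r.+1)%N.
have -> : \sum_(0 <= l < r.+1) f ((u.+1 + l) %% r.+1)%N = \sum_(0 <= l < r.+1) h l.+1.
  by apply: eq_bigr => l _; rewrite /h addSnnS.
have e1 := @big_nat_recl W 0 +%R r.+1 0 h (leq0n _).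
have e2 := @big_nat_recr W 0 +%R r.+1 0 h (leq0n _).
have e3 : h r.+1 = h 0 by rewrite /h addn0 -modnDmr modnn addn0.
apply: (addrI (h 0)); rewrite -e1 e2 e3 addrC //.
Qed.

Lemma zfact (p m : nat) : prime p -> (1 <= m)%N -> forall x : 'Z_(p ^ m),
  x *+ (p ^ m.-1) = 0 -> exists d, x = d *+ p.
Proof.
move=> pp m1 x hx.
have p1 := prime_gt1 pp.
have M1 : (1 < p ^ m)%N by rewrite -(expn0 p) ltn_exp2l.
have xE : x = (nat_of_ord x)%:R :> 'Z_(p ^ m) by rewrite natr_Zp.
rewrite xE -mulrnA Zp_nat in hx.
move/(congr1 val): hx; rewrite /=.
move: (nat_of_ord x) xE => v xE hx.
have H : (p ^ m %| v * p ^ m.-1)%N by rewrite /dvdn -{1}(Zp_cast M1) hx.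
have {}H : (p %| v)%N.
  have E : (p ^ m = p * p ^ m.-1)%N by rewrite -expnS prednK.
  by move: H; rewrite E; rewrite dvdn_pmul2r ?expn_gt0 ?prime_gt0.
move: H => /dvdnP [k hk].
exists (k%:R); by rewrite xE hk natrM mulr_natr.
Qed.

Section Core.
Variables (R : pzRingType) (W : lmodType R) (J : finType) (r Nn p : nat)
  (F : W -> W) (e : J -> nat -> W).
Hypothesis hr : (0 < r)%N.
Hypothesis hF : forall a u v, F (a *: u + v) = a *: F u + F v.
Hypothesis hFe : forall i u, (u < r)%N -> F (e i u) = e i (u.+1 %% r).
Hypothesis hspan : forall w, exists c : J -> nat -> R,
  w = \sum_(i : J) \sum_(u < r) c i u *: e i u.
Hypothesis huniq : forall c : J -> nat -> R,
  \sum_(i : J) \sum_(u < r) c i u *: e i u = 0 -> forall i u, (u < r)%N -> c i u = 0.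
Hypothesis hR : forall x : R, x *+ Nn = 0 -> exists d, x = d *+ p.

Lemma core y z : F y - y = z *+ Nn -> exists a b, z = (F a - a) + b *+ p.
Proof.
move=> hyz.
have hFi := lin_iter hF.
have eit : forall i u, (u < r)%N -> e i u = iter u F (e i 0).
  move=> i; elim=> [//|u IH] hu /=.
  by rewrite -IH ?(ltnW hu) // hFe ?(ltnW hu) // modn_small.
have erot : forall i u l, (u < r)%N -> iter l F (e i u) = e i ((u + l) %% r).
  move=> i u; elim=> [|l IH] hu /=; first by rewrite addn0 modn_small.
  rewrite IH // hFe ?ltn_pmod //. by rewrite -(addn1 ((u + l) %% r)) modnDml addn1 -addnS.
pose N w := \sum_(0 <= l < r) iter l F w.
have hN : forall a u v, N (a *: u + v) = a *: N u + N v.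
  move=> a u v; rewrite /N; under eq_bigr => l _ do rewrite hFi.
  by rewrite big_split /= scaler_sumr.
have NT : forall w, N (F w - w) = 0.
  move=> w; rewrite /N; under eq_bigr => l _ do rewrite (linGB (hFi l)) -iterSr.
  rewrite telescope_sumr // /=.
  have [c ->] := hspan w.
  rewrite (big_morph (iter r F) (linGD (hFi r)) (linG0 (hFi r))) /=; apply/eqP; rewrite subr_eq0.
  apply/eqP; apply: eq_bigr => i _.
  rewrite (big_morph (iter r F) (linGD (hFi r)) (linG0 (hFi r))).
  apply: eq_bigr => u _; rewrite (linGZ (hFi r)) erot //.
  by rewrite addnC modnDl modn_small.
have hNz : N z *+ Nn = 0 by rewrite -(linGMn hN) -hyz NT.
have [c hz] := hspan z.
pose O i := \sum_(u < r) c i u.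
have Ne : forall i u, (u < r)%N -> N (e i u) = \sum_(v < r) e i v.
  move=> i u hu; rewrite /N; under eq_bigr => l _ do rewrite erot //.
  by rewrite (rot_sum r (fun v => e i v)) big_mkord.
have NzE : N z *+ Nn = \sum_i \sum_(v < r) (O i *+ Nn) *: e i v.
  rewrite hz (big_morph N (linGD hN) (linG0 hN)) -sumrMnl; apply: eq_bigr => i _.
  rewrite (big_morph N (linGD hN) (linG0 hN)).
  under eq_bigr => u _ do rewrite (linGZ hN) Ne //.
  rewrite -scaler_suml scaler_sumr -sumrMnl; apply: eq_bigr => v _.
  by rewrite scalerMnl.
have hO : forall i, exists d, O i = d *+ p.
  move=> i; apply: hR.
  have := huniq (c := fun i v => O i *+ Nn); rewrite -NzE hNz => /(_ erefl i 0%N hr).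
  by [].
have [d hd] := fin_all_exists hO.
pose P u w := \sum_(0 <= l < u) iter l F w.
pose G w := F w - w.
have hG : forall a u v, G (a *: u + v) = a *: G u + G v by exact: lin_sub hF.
have GP : forall u w, G (P u w) = iter u F w - w.
  move=> u w; rewrite /G /P (big_morph F (linGD hF) (linG0 hF)) -sumrB.
  under eq_bigr => l _ do rewrite -iterS.
  by rewrite telescope_sumr.
exists (\sum_i \sum_(u < r) c i u *: P u (e i 0)).
exists (\sum_i d i *: e i 0).
rewrite -/(G _) (big_morph G (linGD hG) (linG0 hG)) -sumrMnl -big_split /=.
rewrite hz; apply: eq_bigr => i _.
rewrite (big_morph G (linGD hG) (linG0 hG)) scalerMnl -hd /O scaler_suml -big_split /=.
apply: eq_bigr => u _.
by rewrite (linGZ hG) GP -scalerDr subrK -eit.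
Qed.
End Core.

Section Grp.
Variables (gT : finGroupType) (H S : {group gT}) (tau : gT).
Hypothesis sSH : S \subset H.
Hypothesis defH : H :=: <[tau]>%g.

Lemma tauH : tau \in H.
Proof. by rewrite defH cycle_id. Qed.

Lemma nSH : H \subset 'N(S)%g.
Proof.
have aH : abelian H by rewrite defH cycle_abelian.
by have := sSH; rewrite (sub_abelian_normal _ aH) => /normal_norm.
Qed.

Lemma tauN : tau \in 'N(S)%g.
Proof. exact: (subsetP nSH _ tauH). Qed.

Lemma ord_coset : #[coset S tau]%g = #|H : S|%g.
Proof. by rewrite -card_quotient ?nSH // defH quotient_cycle ?tauN. Qed.

Lemma q_gt0 : (0 < #|H : S|%g)%N.
Proof. by rewrite -ord_coset order_gt0. Qed.

Lemma tauq : (tau ^+ #|H : S|)%g \in S.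
Proof.
apply: coset_idr; first by rewrite groupX ?tauN.
by rewrite morphX ?tauN // -ord_coset expg_order.
Qed.

Lemma coset_tauX j : (S :* tau ^+ j)%g = coset S (tau ^+ j).
Proof. by rewrite val_coset // groupX ?tauN. Qed.

Lemma rcoset_eqmod a a' : (a = a' %[mod #|H : S|%g])%N ->
  (S :* tau ^+ a)%g = (S :* tau ^+ a')%g.
Proof.
move=> h; rewrite !coset_tauX !morphX ?tauN //; congr val.
by apply/eqP; rewrite eq_expg_mod_order ord_coset h.
Qed.

Lemma rcoset_inj j j' : (j < #|H : S|%g)%N -> (j' < #|H : S|%g)%N ->
  (S :* tau ^+ j)%g = (S :* tau ^+ j')%g -> j = j'.
Proof.
move=> hj hj'; rewrite !coset_tauX !morphX ?tauN // => /val_inj /eqP.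
by rewrite eq_expg_mod_order ord_coset !modn_small // => /eqP.
Qed.

Lemma rcosetsE : rcosets S H =
  [set (S :* tau ^+ (nat_of_ord j))%g | j : 'I_#|H : S|%g].
Proof.
apply/setP => C; apply/imsetP/imsetP => [[x xH ->]|[j _ ->]].
  have /cycleP [k ->] : x \in <[tau]>%g by rewrite -defH.
  exists (Ordinal (ltn_pmod k q_gt0)) => //=.
  by rewrite rcosetE; apply: rcoset_eqmod; rewrite modn_mod.
by exists (tau ^+ j)%g; rewrite ?rcosetE // groupX ?tauH.
Qed.

Lemma rcoset_repr x : x \in H -> exists2 s, s \in S & repr (S :* x)%g = (s * x)%g.
Proof.
move=> xH; have : repr (S :* x)%g \in (S :* x)%g by apply: mem_repr (rcoset_refl _ _).
by case/rcosetP => s sS ->; exists s.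
Qed.
End Grp.

Lemma split_sum (V : zmodType) g r (h : nat -> V) :
  \sum_(0 <= j < g * r) h j = \sum_(j0 < g) \sum_(u < r) h (j0 + u * g)%N.
Proof.
elim: r => [|r IH].
  by rewrite muln0 big_geq // big1 // => j0 _; rewrite big_ord0.
rewrite (big_cat_nat _ (n := g * r)) ?leq_mul2l ?leqnSn ?orbT //= IH.
rewrite -{1}(add0n (g * r)%N) big_addn mulnS addnK.
rewrite big_mkord -big_split /=; apply: eq_bigr => j0 _.
by rewrite big_ord_recr /= mulnC.
Qed.

Section Main.
Variables (p m : nat) (gT : finGroupType) (H S : {group gT}) (tau : gT)
  (W : lmodType 'Z_(p ^ m)) (rho : gT -> W -> W).
Hypothesis sSH : S \subset H.
Hypothesis defH : H :=: <[tau]>%g.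
Hypothesis rmod : is_RH_module H rho.
Hypothesis triv : acts_trivially S rho.

Lemma rho_mod a w : rho (tau ^+ a)%g w = rho (tau ^+ (a %% #|H : S|))%g w.
Proof.
have [_ _ rmul] := rmod.
have tH := tauH defH.
rewrite {1}(divn_eq a #|H : S|%g) expgD mulnC expgM rmul ?groupX //.
  by rewrite triv // groupX // tauq.

Qed.

Lemma rho_eqmod a a' w : (a = a' %[mod #|H : S|%g])%N ->
  rho (tau ^+ a)%g w = rho (tau ^+ a')%g w.
Proof. by move=> h; rewrite rho_mod h -rho_mod. Qed.

Lemma rho_repr x w : x \in H -> rho (repr (S :* x))%g w = rho x w.
Proof.
have [_ _ rmul] := rmod.
move=> xH; have [s sS ->] := rcoset_repr S xH.
by rewrite rmul ?(subsetP sSH _ sS) // triv.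
Qed.

Lemma sum_rc (phi : {set gT} -> 'Z_(p ^ m)) w :
  \sum_(C in rcosets S H) phi C *: rho (repr C) w =
  \sum_(0 <= j < #|H : S|%g) phi (S :* tau ^+ j)%g *: rho (tau ^+ j)%g w.
Proof.
rewrite (rcosetsE sSH defH) big_imset /=.
  rewrite big_mkord; apply: eq_bigr => j _.
  by rewrite rho_repr // groupX // tauH.
by move=> j j' _ _ /(rcoset_inj sSH defH) => h; apply: val_inj; apply: h.
Qed.
End Main.

From mathcomp Require Import zify.
Unset Implicit Arguments.

Theorem lemma4p2 (p n m : nat) (gT : finGroupType) (G H S : {group gT}) (tau : gT)
  (W : lmodType 'Z_(p ^ m)) (rho : gT -> W -> W) :
  prime p -> (2 <= m)%N ->
  cyclic G -> #|G| = (p ^ n)%N ->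
  H \subset G -> S \subset H -> H :=: <[tau]>%g ->
  is_RH_module H rho ->
  cyclic_RH_module H rho ->
  acts_trivially S rho ->
  free_RHS_module H S rho ->
  ~ property_P rho tau p m.
Proof.
move=> pp m2 _ cardG sHG sSH defH rmod _ triv [b [bspan buniq]]
  [s [y [z [_ [hz hyz]]]]].
have [rlin _ rmul] := rmod.
have tH := tauH defH.
have qgt0 := q_gt0 sSH defH.
set q := #|H : S|%g in qgt0.
have [k _ qE] : exists2 k, (k <= n)%N & q = (p ^ k)%N.
  apply/dvdn_pfactor => //; rewrite -cardG.
  exact: dvdn_trans (dvdn_indexg H S) (cardSg sHG).
have [g [r [gr0 [grq hg]]]] : exists g r, [/\ (0 < r)%N, (g * r)%N = q &
     (p ^ s = g %[mod q])%N].
  case: (leqP s k) => hsk.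
    exists (p ^ s)%N, (p ^ (k - s))%N; split => //; first by rewrite expn_gt0 prime_gt0.
    by rewrite -expnD subnKC.
  exists q, 1%N; split => //; first by rewrite muln1.
  rewrite modnn; apply/eqP; rewrite -/(dvdn _ _) qE dvdn_exp2l // ltnW //.
have g0 : (0 < g)%N by move: qgt0; rewrite -grq muln_gt0 => /andP[].
pose sig := (tau ^+ (p ^ s))%g.
have sigH : sig \in H by rewrite groupX.
pose J := ('I_(size b) * 'I_g)%type.
pose e (x : J) (u : nat) := rho (tau ^+ (x.2 + u * g))%g b`_(x.1).
apply: hz.
apply: (@core _ W J r (p ^ m.-1) p (rho sig) e) hyz => //.
- by move=> a u v; rewrite rlin.
- move=> [i j0] u hu; rewrite /e /= -rmul ?groupX // /sig -expgD.
  apply: (rho_eqmod sSH defH rmod triv).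
  have E1 : ((p ^ s + (j0 + u * g)) %% q = (g + (j0 + u * g)) %% q)%N.
    by rewrite -[in LHS]modnDml hg modnDml.
  have E2 : ((j0 + u.+1 %% r * g) %% q = (j0 + u.+1 * g) %% q)%N.
    by rewrite muln_modl (mulnC r g) grq modnDmr.
  rewrite E1 E2; congr (_ %% _)%N; rewrite mulSn; lia.
- move=> w; have [c ->] := bspan w.
  exists (fun (x : J) u => c x.1 (S :* tau ^+ (x.2 + u * g))%g).
  rewrite -(pair_big xpredT xpredT (fun (i : 'I_(size b)) (j0 : 'I_g) => \sum_(u < r)
     c i (S :* tau ^+ (j0 + u * g))%g *: rho (tau ^+ (j0 + u * g))%g b`_i)) /=.
  apply: eq_bigr => i _.
  by rewrite (sum_rc sSH defH rmod triv) -/q -grq split_sum.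
- move=> c2 h0.
  pose idx (C : {set gT}) := odflt 0%N (omap val [pick j : 'I_q | (S :* tau ^+ j)%g == C]).
  have idxE : forall j, (j < q)%N -> idx (S :* tau ^+ j)%g = j.
    move=> j hj; rewrite /idx; case: pickP => [j' /eqP hj'|none] /=; first exact: (rcoset_inj sSH defH (ltn_ord j') hj hj').
    by have := none (Ordinal hj); rewrite eqxx.
  pose c (i : nat) (C : {set gT}) : 'Z_(p ^ m) :=
    if @insub _ _ 'I_(size b) i is Some i' then
      c2 (i', Ordinal (ltn_pmod (idx C) g0)) (idx C %/ g)%N else 0.
  have cE : forall (i : 'I_(size b)) (j0 : 'I_g) u, (u < r)%N ->
      c i (S :* tau ^+ (j0 + u * g))%g = c2 (i, j0) u.
    move=> i j0 u hu; rewrite /c valK idxE; last first.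
      rewrite -grq; have := ltn_ord j0; nia.
    congr c2; last by rewrite addnC divnMDl // divn_small ?addn0.
    by congr pair; apply: val_inj; rewrite /= addnC modnMDl modn_small.
  have hs : \sum_(i < size b) \sum_(C in rcosets S H) c i C *: rho (repr C) b`_i = 0.
    have h0' : \sum_(x : J) \sum_(u < r) c2 (x.1, x.2) u *: e (x.1, x.2) u = 0.
      by rewrite -[RHS]h0; under eq_bigr => x _ do rewrite -surjective_pairing.
    rewrite -[RHS]h0' -(pair_big xpredT xpredT (fun (i : 'I_(size b)) (j0 : 'I_g) => \sum_(u < r)
      c2 (i, j0) u *: e (i, j0) u)) /=.
    apply: eq_bigr => i _.
    rewrite (sum_rc sSH defH rmod triv) -/q -grq split_sum.
    apply: eq_bigr => j0 _; apply: eq_bigr => u _.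
    by rewrite cE.
  move=> [i j0] u hu; rewrite -cE //.
  apply: (buniq c hs) => //.
  rewrite (rcosetsE sSH defH); apply/imsetP.
  have hlt : (j0 + u * g < q)%N by rewrite -grq; have := ltn_ord j0; nia.
  by exists (Ordinal hlt).
- by apply: zfact => //; apply: ltnW.
Qed.
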